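(* Consider instances with binary domains ($|D_i|=2$ for all $i$) and a natural target distribution $\pi$ (i.e. $k\pi_i^j$ is an integer for all $i,j$), with loss $\|\cdot\|_1$. Consider the local search algorithm with parameter $\ell=1$: start from an arbitrary committee $A\subseteq C$ with $|A|=k$; while there exist $a\in A$ and $c\in C\setminus A$ with $\|\pi,r((A\setminus\{a\})\cup\{c\})\|_1<\|\pi,r(A)\|_1$, replace $A$ by $(A\setminus\{a\})\cup\{c\}$; output $A$. Then for every instance and every starting committee, the output $A$ satisfies $\|\pi,r(A)\|_1-\|\pi,r(A^* )\|_1\le p$, where $A^*$ is a committee of size $k$ optimal for $\|\cdot\|_1$ and $p$ is the number of attributes.
   Context: Attributes $X_1,\dots,X_p$, each with finite domain $D_i=\{x_i^1,\dots,x_i^{q_i}\}$. A candidate database is a finite set $C$ in which each candidate $c$ has a value vector $(X_1(c),\dots,X_p(c))\in D_1\times\dots\times D_p$ (different candidates may share a vector). A target distribution is $\pi=(\pi_1,\dots,\pi_p)$ with $\pi_i=(\pi_i^1,\dots,\pi_i^{q_i})$ nonnegative reals summing to $1$; $k\in\{1,\dots,|C|\}$. For $A\subseteq C$ with $|A|=k$, $r_i^j(A)=|\{c\in A: X_i(c)=x_i^j\}|/k$, and $\|\pi,r(A)\|_1=\sum_{i,j}|r_i^j(A)-\pi_i^j|$. A committee of size $k$ is optimal if it minimizes this loss over all $k$-element subsets of $C$. *)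

(* Defs.v *)
From HB Require Import structures.
From mathcomp Require Import all_boot all_order all_algebra.
From mathcomp Require Export all_boot all_order all_algebra.
Set Implicit Arguments. Unset Strict Implicit. Unset Printing Implicit Defensive.
Import Order.TTheory GRing.Theory Num.Theory.
Local Open Scope ring_scope.

Section Committee.
Variables (R : realFieldType) (C : finType) (p : nat).
(* binary domains: each attribute i : 'I_p takes a value in bool (D_i = {false,true}) *)
Variable X : C -> 'I_p -> bool.
Variable pi : 'I_p -> bool -> R.
Variable k : nat.

Definition ratio (A : {set C}) (i : 'I_p) (j : bool) : R :=
  (#|[set c in A | X c i == j]|)%:R / k%:R.

Definition loss (A : {set C}) : R :=
  \sum_(i < p) \sum_(j : bool) `|ratio A i j - pi i j|.

Definition is_distribution : Prop :=
  forall i, (forall j, 0 <= pi i j) /\ \sum_(j : bool) pi i j = 1.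

Definition natural_target : Prop :=
  forall i j, exists z : int, k%:R * pi i j = z%:~R.

Definition swap (A : {set C}) (a c : C) : {set C} := c |: (A :\ a).

Definition ls_step : rel {set C} := fun A B =>
  [exists a in A, exists c in ~: A, (B == swap A a c) && (loss B < loss A)].

Definition ls_terminal (A : {set C}) : bool :=
  [forall a in A, forall c in ~: A, ~~ (loss (swap A a c) < loss A)].

Definition ls_output (A0 A : {set C}) : Prop :=
  connect ls_step A0 A /\ ls_terminal A.

Definition optimal (Astar : {set C}) : Prop :=
  #|Astar| = k /\ forall B : {set C}, #|B| = k -> loss Astar <= loss B.

End Committee.

(* Main.v *)
Require Import Defs.
From mathcomp Require Import all_boot all_order all_algebra zify ring lra.
Import Order.TTheory GRing.Theory Num.Theory.
Local Open Scope ring_scope.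

Section S.
Variables (C : finType) (p : nat) (X : C -> 'I_p -> bool).
Definition cnt (A : {set C}) i : nat := #|[set c in A | X c i]|.

Lemma cnt_true (A : {set C}) i : #|[set c in A | X c i == true]| = cnt A i.
Proof. by apply: eq_card => x; rewrite !inE eqb_id. Qed.

Lemma cnt_false (A : {set C}) i : #|[set c in A | X c i == false]| = (#|A| - cnt A i)%N.
Proof.
rewrite -(cardsID [set c | X c i] A) /cnt.
have -> : [set c in A | X c i] = A :&: [set c | X c i].
  by apply/setP => x; rewrite !inE.
rewrite addKn; apply: eq_card => x; rewrite !inE; by case: (X x i); rewrite ?andbF ?andbT.
Qed.

Lemma cnt_le (A : {set C}) i : (cnt A i <= #|A|)%N.
Proof. by apply: subset_leq_card; apply/subsetP => x; rewrite inE => /andP[]. Qed.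

Lemma cnt_swap (A : {set C}) a c i : a \in A -> c \notin A ->
  (cnt (swap A a c) i + X a i = cnt A i + X c i)%N.
Proof.
move=> aA cA; rewrite /cnt /swap.
rewrite (cardsD1 a [set x in A | X x i]) (cardsD1 c [set x in c |: A :\ a | X x i]).
rewrite !inE aA eqxx /=.
have -> : [set x in c |: A :\ a | X x i] :\ c = [set x in A | X x i] :\ a.
  apply/setP => x; rewrite !inE; case: (eqVneq x c) => [->|] /=.
    by rewrite (negbTE cA) andbF.
  by move=> _; rewrite andbA.
lia.
Qed.

Lemma card_swap (A : {set C}) a c : a \in A -> c \notin A -> #|swap A a c| = #|A|.
Proof.
move=> aA cA; rewrite /swap cardsU1 (cardsD1 a A) aA !inE negb_and negbK cA orbT.
by rewrite add1n.
Qed.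
End S.
Arguments cnt {C p} X A i.
Arguments cnt_le {C p} X A i.
Arguments cnt_true {C p} X A i.
Arguments cnt_false {C p} X A i.
Arguments cnt_swap {C p} X A a c i.

Section L.
Variables (R : realFieldType) (C : finType) (p : nat) (X : C -> 'I_p -> bool).
Variables (pi : 'I_p -> bool -> R) (k : nat) (z : 'I_p -> int).
Hypothesis k0 : (0 < k)%N.
Hypothesis Hz : forall i, k%:R * pi i true = (z i)%:~R.
Hypothesis Hpi : forall i, pi i false = 1 - pi i true.

Definition F (A : {set C}) : int := \sum_(i < p) `|(cnt X A i)%:Z - z i|.

Lemma loss_eq (A : {set C}) : #|A| = k -> loss X pi k A * k%:R = 2 * (F A)%:~R.
Proof.
move=> hA; rewrite /loss /F mulr_suml rmorph_sum mulr_sumr; apply: eq_bigr => i _.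
rewrite big_bool /= /Defs.ratio cnt_true cnt_false hA natrB; last by rewrite -hA cnt_le.
have kk : k%:R != 0 :> R by rewrite pnatr_eq0 -lt0n.
have ep : pi i true = (z i)%:~R / k%:R by rewrite -Hz; field.
set n := cnt X A i.
have e1 : n%:R / k%:R - pi i true = ((n%:Z - z i)%:~R) / k%:R.
  by rewrite ep intrB -pmulrn; field.
have e2 : (k%:R - n%:R) / k%:R - pi i false = - (((n%:Z - z i)%:~R) / k%:R).
  by rewrite Hpi ep intrB -pmulrn; field.
rewrite e1 e2 normrN normrM normfV (@gtr0_norm _ k%:R) ?ltr0n // -intr_norm.
by field.
Qed.
End L.

Lemma cnt_sum (C : finType) p (X : C -> 'I_p -> bool) (B : {set C}) i :
  (cnt X B i)%:Z = \sum_(x in B) (X x i : nat)%:Z.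
Proof.
rewrite -(big_morph Posz PoszD (erefl (Posz 0))); congr Posz.
rewrite /cnt -sum1_card.
rewrite (eq_bigl (fun x => (x \in B) && X x i)); last by move=> x; rewrite inE.
rewrite big_mkcondr; apply: eq_bigr => x _; by case: (X x i).
Qed.

Lemma key (d : int) (bc ba : bool) :
  `|d + (bc%:Z - ba%:Z)| <= `|d| + sgz d * (bc%:Z - ba%:Z) + (d == 0)%:Z.
Proof.
case: (ltgtP d 0) => h.
- rewrite ltr0_sgz // (ltr0_norm h). case: bc; case: ba => /=; lia.
- rewrite gtr0_sgz // (gtr0_norm h). case: bc; case: ba => /=; lia.
- subst d; rewrite sgz0; case: bc; case: ba => /=; lia.
Qed.

Lemma key2 (d e : int) : `|d| - `|e| <= sgz d * (d - e).
Proof.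
case: (ltgtP d 0) => h.
- rewrite ltr0_sgz // (ltr0_norm h). case: (ltgtP e 0) => h2; [rewrite (ltr0_norm h2)|rewrite (gtr0_norm h2)|subst e]; lia.
- rewrite gtr0_sgz // (gtr0_norm h). case: (ltgtP e 0) => h2; [rewrite (ltr0_norm h2)|rewrite (gtr0_norm h2)|subst e]; lia.
- subst d; rewrite sgz0 normr0; lia.
Qed.

Lemma key3 (n : nat) (z : int) (k : nat) : (n <= k)%N -> 0 <= z <= k%:Z ->
  `|n%:Z - z| <= k%:Z * (1 - (n%:Z - z == 0)%:Z).
Proof.
move=> h1 /andP[h2 h3]; case: eqP => h.
- rewrite h normr0; lia.
- case: (ltgtP (n%:Z - z) 0) => h4; [rewrite (ltr0_norm h4)|rewrite (gtr0_norm h4)|]; lia.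
Qed.

Section Core.
Variables (C : finType) (p : nat) (X : C -> 'I_p -> bool) (k : nat) (z : 'I_p -> int).
Variables (A As : {set C}).
Hypotheses (hA : #|A| = k) (hS : #|As| = k) (zb : forall i, 0 <= z i <= k%:Z).
Let FF (B : {set C}) : int := \sum_(i < p) `|(cnt X B i)%:Z - z i|.
Hypothesis loc : forall a c, a \in A -> c \notin A -> FF A <= FF (swap A a c).

Let d i := (cnt X A i)%:Z - z i.
Let s i := sgz (d i).
Let Zc : int := \sum_(i < p) (d i == 0)%:Z.
Let w x : int := \sum_(i < p) s i * (X x i : nat)%:Z.
Let W (B : {set C}) := \sum_(x in B) w x.

Lemma step1 a c : a \in A -> c \notin A -> w a <= w c + Zc.
Proof.
move=> aA cA; have := loc a c aA cA.
have : FF (swap A a c) <= FF A + (w c - w a) + Zc.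
  rewrite /FF /w /Zc -!sumrB -!big_split /=; apply: ler_sum => i _.
  have -> : (cnt X (swap A a c) i)%:Z - z i = d i + ((X c i)%:Z - (X a i)%:Z).
    have := cnt_swap X A a c i aA cA; rewrite /d; lia.
  apply: le_trans (key _ _ _) _; by rewrite /s mulrBr.
move=> h1 h2; have := le_trans h2 h1.
move: (FF A) (w c) (w a) Zc => x y u v; lia.
Qed.

Lemma stepW (B : {set C}) : W B = \sum_(i < p) s i * (cnt X B i)%:Z.
Proof.
rewrite /W /w exchange_big /=; apply: eq_bigr => i _.
by rewrite cnt_sum mulr_sumr.
Qed.

Lemma stepF : FF A - FF As <= W A - W As.
Proof.
rewrite !stepW /FF -!sumrB; apply: ler_sum => i _; rewrite -mulrBr.
apply: le_trans (key2 (d i) ((cnt X As i)%:Z - z i)) _.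
have -> : d i - ((cnt X As i)%:Z - z i) = (cnt X A i)%:Z - (cnt X As i)%:Z by rewrite /d; lia.
by [].
Qed.

Lemma stepUV : W A - W As = W (A :\: As) - W (As :\: A).
Proof.
rewrite /W (big_setID (A:=A) As) (big_setID (A:=As) A) setIC /=.
by rewrite opprD addrACA subrr add0r.
Qed.

Lemma cardUV : #|A :\: As| = #|As :\: A|.
Proof.
have h1 := cardsID As A; have h2 := cardsID A As.
rewrite setIC in h2; lia.
Qed.

Lemma stepm : W (A :\: As) <= W (As :\: A) + (#|A :\: As|)%:Z * Zc.
Proof.
set m := #|A :\: As|.
have h : \sum_(a in A :\: As) \sum_(c in As :\: A) w a <=
         \sum_(a in A :\: As) \sum_(c in As :\: A) (w c + Zc).
  apply: ler_sum => a; rewrite !inE => /andP[_ aA]; apply: ler_sum => c.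
  rewrite !inE => /andP[cA _]; exact: step1.
have e1 : forall y : int, \sum_(c in As :\: A) y = y *+ m by move=> y; rewrite sumr_const -cardUV.
rewrite (eq_bigr (fun a => w a *+ m)) in h; last by move=> a _; rewrite e1.
rewrite [X in _ <= X](eq_bigr (fun a => W (As :\: A) + Zc *+ m)) in h; last first.
  by move=> a _; rewrite big_split /= e1.
rewrite sumrMnl sumr_const -/m -/(W _) in h.
case: (posnP m) => hm.
  have e2 : A :\: As = set0 by apply/eqP; rewrite -cards_eq0 -/m hm.
  have e3 : As :\: A = set0 by apply/eqP; rewrite -cards_eq0 -cardUV -/m hm.
  by rewrite /W e2 e3 !big_set0 hm mul0r addr0.
rewrite ler_pMn2r // in h.
by rewrite -mulr_natl natz in h.
Qed.

Lemma stepFA : FF A <= k%:Z * p%:Z - k%:Z * Zc.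
Proof.
have h : FF A <= \sum_(i < p) k%:Z * (1 - (d i == 0)%:Z).
  apply: ler_sum => i _; apply: key3 => //; by rewrite -hA cnt_le.
apply: (le_trans h); rewrite -mulr_sumr sumrB sumr_const card_ord -/Zc mulrBr.
by rewrite natz.
Qed.

Lemma core : 2 * (FF A - FF As) <= p%:Z * k%:Z.
Proof.
have h1 := stepF; rewrite stepUV in h1.
have h2 := stepm.
have hm : (#|A :\: As| <= k)%N by rewrite -hA subset_leq_card // subsetDl.
have hZ : 0 <= Zc by apply: sumr_ge0 => i _.
have h3 : (#|A :\: As|)%:Z * Zc <= k%:Z * Zc by apply: ler_wpM2r => //; rewrite lez_nat.
have h4 := stepFA.
have h5 : 0 <= FF As by apply: sumr_ge0 => i _.
rewrite [p%:Z * _]mulrC; move: h1 h2 h3 h4 h5.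
move: (FF A) (FF As) (W _) (W _) (_ * Zc) (k%:Z * Zc) (k%:Z * p%:Z) => a b c e f g q.
lia.
Qed.
End Core.

Lemma size_inv (C : finType) (R : realFieldType) p (X : C -> 'I_p -> bool) (pi : 'I_p -> bool -> R) k
  (A0 B : {set C}) : connect (ls_step X pi k) A0 B -> #|A0| = k -> #|B| = k.
Proof.
case/connectP => s; elim: s A0 => [|y s IH] A0 /=; first by move=> _ -> .
case/andP => st pth lst h0; apply: (IH y pth lst).
case/existsP: st => a /andP[aA /existsP[c /andP[cA /andP[/eqP -> _]]]].
by rewrite card_swap // -in_setC.
Qed.

Arguments size_inv {C R p X pi k A0 B}.
Arguments loss_eq {R C p X pi k z} k0 Hz Hpi A.
Arguments core {C p X k z A As}.
Arguments F {C p} X z A.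

Theorem theorem1 (R : realFieldType) (C : finType) (p : nat)
    (X : C -> 'I_p -> bool) (pi : 'I_p -> bool -> R) (k : nat) :
  (0 < k)%N -> (k <= #|C|)%N ->
  is_distribution pi -> natural_target pi k ->
  forall A0 A Astar : {set C},
    #|A0| = k ->
    ls_output X pi k A0 A ->
    optimal X pi k Astar ->
    loss X pi k A - loss X pi k Astar <= p%:R.
Proof.
move=> k0 _ Hd Hn A0 A As h0 [Hc Ht] [hS _].
have [z Hz] := fin_all_exists (fun i => Hn i true).
have Hpi : forall i, pi i false = 1 - pi i true.
  move=> i; have [_ hs] := Hd i; rewrite big_bool /= in hs; rewrite -hs; ring.
have hA := size_inv Hc h0.
have kR : 0 < k%:R :> R by rewrite ltr0n.
have zb : forall i, 0 <= z i <= k%:Z.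
  move=> i; have [hp hs] := Hd i; rewrite big_bool /= in hs.
  have h1 := hp true; have h2 := hp false.
  have e := Hz i.
  rewrite -(ler0z R) -(ler_int R) -e -pmulrn; apply/andP; split.
    by rewrite mulr_ge0 // ltW.
  apply: ler_piMr; [exact: ltW | lra].
have LE := loss_eq (X:=X) k0 Hz Hpi.
have loc : forall a c, a \in A -> c \notin A -> F X z A <= F X z (swap A a c).
  move=> a c aA cA.
  have := Ht; move/forallP/(_ a)/implyP/(_ aA)/forallP/(_ c)/implyP.
  rewrite in_setC => /(_ cA); rewrite -leNgt => hle.
  rewrite -(ler_int R) -(ler_pM2l (ltr0Sn R 1)) -LE // -LE ?card_swap //.
  by rewrite ler_pM2r.
have := core hA hS zb loc.
rewrite -(ler_int R) intrM intrB -!pmulrn => h.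
rewrite -(ler_pM2r kR) mulrBl !LE //.
move: h; rewrite natrM => h. apply: le_trans h. by rewrite mulrBr.
Qed.
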